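(* Let $\alpha:I\to\mathbb{E}^3$ be a smooth space curve parametrized by arclength $s$ with curvature $\kappa\equiv1$. Then $\alpha$ is a Salkowski curve if and only if $\det(\alpha^{(3)}(s),\alpha^{(4)}(s),\alpha^{(5)}(s))=0$ for all $s\in I$.
   Context: $\alpha^{(k)}$ denotes the $k$-th derivative with respect to arclength, and $\det(u,v,w)$ is the determinant of the matrix with columns $u,v,w$. $\{T,N,B\}$ is the Frenet frame of $\alpha$. A Salkowski curve is a curve of constant curvature whose principal normal vector $N$ makes a constant angle with a fixed direction, i.e. $\langle N(s),d\rangle$ is constant for some fixed unit vector $d$ (equivalently, for $\kappa\equiv1$, $\alpha$ is a slant helix). *)

(* Defs.v *)
From Stdlib Require Import Reals Lra.
Open Scope R_scope.

Record R3 := mkR3 { vx : R; vy : R; vz : R }.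

Definition dot (u v : R3) : R := vx u * vx v + vy u * vy v + vz u * vz v.
Definition vnorm (u : R3) : R := sqrt (dot u u).
Definition vscale (c : R) (u : R3) : R3 := mkR3 (c * vx u) (c * vy u) (c * vz u).

Definition det3 (u v w : R3) : R :=
    vx u * (vy v * vz w - vz v * vy w)
  - vx v * (vy u * vz w - vz u * vy w)
  + vx w * (vy u * vz v - vz u * vy v).

Definition is_open_interval (I : R -> Prop) : Prop :=
  (exists x, I x) /\
  (forall x, I x -> exists eps, 0 < eps /\ forall y, Rabs (y - x) < eps -> I y) /\
  (forall x y z, I x -> I z -> x <= y <= z -> I y).

(* D is the family of all derivatives of the curve alpha on I:
   D 0 = alpha and D (k+1) is the derivative of D k on I (componentwise).
   Existence of such a D is exactly smoothness (C^infinity) of alpha on I,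
   and then D k = alpha^(k) on I. *)
Definition derivs_on (I : R -> Prop) (alpha : R -> R3) (D : nat -> R -> R3) : Prop :=
  (forall s, I s -> D 0%nat s = alpha s) /\
  (forall (k : nat) s, I s ->
      derivable_pt_lim (fun t => vx (D k t)) s (vx (D (S k) s)) /\
      derivable_pt_lim (fun t => vy (D k t)) s (vy (D (S k) s)) /\
      derivable_pt_lim (fun t => vz (D k t)) s (vz (D (S k) s))).

Definition unit_speed (I : R -> Prop) (D : nat -> R -> R3) : Prop :=
  forall s, I s -> vnorm (D 1%nat s) = 1.

Definition tangent (D : nat -> R -> R3) (s : R) : R3 := D 1%nat s.
Definition curvature (D : nat -> R -> R3) (s : R) : R := vnorm (D 2%nat s).
Definition principal_normal (D : nat -> R -> R3) (s : R) : R3 :=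
  vscale (/ curvature D s) (D 2%nat s).

Definition salkowski (I : R -> Prop) (D : nat -> R -> R3) : Prop :=
  (exists c, forall s, I s -> curvature D s = c) /\
  (exists d : R3, vnorm d = 1 /\
     exists c, forall s, I s -> dot (principal_normal D s) d = c).

(* Main.v *)
Require Import Defs.
From Stdlib Require Import Reals Lra Psatz.
Open Scope R_scope.

Lemma dpl_ext f x l l' : derivable_pt_lim f x l -> l = l' -> derivable_pt_lim f x l'.
Proof. intros H ->; exact H. Qed.

Lemma dpl_plus f g x a b : derivable_pt_lim f x a -> derivable_pt_lim g x b ->
  derivable_pt_lim (fun t => f t + g t) x (a + b).
Proof. intros; apply (derivable_pt_lim_plus f g x a b); auto. Qed.

Lemma dpl_minus f g x a b : derivable_pt_lim f x a -> derivable_pt_lim g x b ->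
  derivable_pt_lim (fun t => f t - g t) x (a - b).
Proof. intros; apply (derivable_pt_lim_minus f g x a b); auto. Qed.

Lemma dpl_mult f g x a b : derivable_pt_lim f x a -> derivable_pt_lim g x b ->
  derivable_pt_lim (fun t => f t * g t) x (a * g x + f x * b).
Proof. intros; apply (derivable_pt_lim_mult f g x a b); auto. Qed.

Lemma dpl_cst c x : derivable_pt_lim (fun _ => c) x 0.
Proof. apply (derivable_pt_lim_const c x). Qed.

Definition cross (u v : R3) : R3 :=
  mkR3 (vy u * vz v - vz u * vy v) (vz u * vx v - vx u * vz v) (vx u * vy v - vy u * vx v).

Definition vderiv (F : R -> R3) s (v : R3) :=
  derivable_pt_lim (fun t => vx (F t)) s (vx v) /\
  derivable_pt_lim (fun t => vy (F t)) s (vy v) /\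
  derivable_pt_lim (fun t => vz (F t)) s (vz v).

Lemma vderiv_dot F G s a b : vderiv F s a -> vderiv G s b ->
  derivable_pt_lim (fun t => dot (F t) (G t)) s (dot a (G s) + dot (F s) b).
Proof.
  intros [h1 [h2 h3]] [k1 [k2 k3]]. unfold dot.
  eapply dpl_ext.
  { apply dpl_plus; [apply dpl_plus|]; apply dpl_mult; eassumption. }
  cbv beta; ring.
Qed.

Lemma vderiv_cross F G s a b : vderiv F s a -> vderiv G s b ->
  vderiv (fun t => cross (F t) (G t)) s
    (mkR3 (vx (cross a (G s)) + vx (cross (F s) b))
          (vy (cross a (G s)) + vy (cross (F s) b))
          (vz (cross a (G s)) + vz (cross (F s) b))).
Proof.
  intros [h1 [h2 h3]] [k1 [k2 k3]]. unfold cross; simpl.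
  split; [|split]; (eapply dpl_ext; [apply dpl_minus; apply dpl_mult; eassumption| idtac]).
  all: simpl; ring.
Qed.

Lemma vderiv_ext F s v w : vderiv F s v -> v = w -> vderiv F s w.
Proof. intros H ->; exact H. Qed.

Lemma vderiv_cst d s : vderiv (fun _ => d) s (mkR3 0 0 0).
Proof. split; [|split]; apply dpl_cst. Qed.

Lemma D_vderiv J alpha D k s : derivs_on J alpha D -> J s -> vderiv (D k) s (D (S k) s).
Proof. intros [_ H] Hs. exact (H k s Hs). Qed.

Lemma deriv_const0 J f s l c : is_open_interval J -> (forall t, J t -> f t = c) -> J s ->
  derivable_pt_lim f s l -> l = 0.
Proof.
  intros [_ [Hop _]] Hc Hs Hd.
  destruct (Req_dec l 0) as [|Hl]; auto. exfalso.
  destruct (Hd (Rabs l) (Rabs_pos_lt _ Hl)) as [delta Hdel].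
  destruct (Hop s Hs) as [e [He HJ]].
  set (h := Rmin delta e / 2).
  assert (Hm : 0 < Rmin delta e) by (apply Rmin_pos; [apply cond_pos|lra]).
  assert (Hh : 0 < h) by (unfold h; lra).
  assert (Hh1 : h < delta) by (unfold h; pose proof (Rmin_l delta e); lra).
  assert (Hh2 : h < e) by (unfold h; pose proof (Rmin_r delta e); lra).
  assert (HJ' : J (s + h)) by (apply HJ; rewrite Rabs_right; lra).
  specialize (Hdel h (Rgt_not_eq _ _ Hh) ltac:(rewrite Rabs_right; lra)).
  rewrite (Hc _ HJ'), (Hc _ Hs) in Hdel.
  replace ((c - c) / h - l) with (- l) in Hdel by (field; lra).
  rewrite Rabs_Ropp in Hdel. lra.
Qed.

Lemma deriv0_const J f x y : is_open_interval J -> (forall s, J s -> derivable_pt_lim f s 0) ->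
  J x -> J y -> f x = f y.
Proof.
  intros [_ [_ Hcv]] Hd Hx Hy.
  destruct (Rtotal_order x y) as [H|[H|H]].
  - destruct (MVT_cor2 f (fun _ => 0) x y H) as [c [Hc _]].
    + intros c Hc. apply Hd. apply (Hcv x c y); auto.
    + lra.
  - subst; auto.
  - destruct (MVT_cor2 f (fun _ => 0) y x H) as [c [Hc _]].
    + intros c Hc. apply Hd. apply (Hcv y c x); auto.
    + lra.
Qed.

Lemma dot_comm u v : dot u v = dot v u.
Proof. unfold dot; ring. Qed.

Lemma dot_nonneg u : 0 <= dot u u.
Proof. unfold dot; nra. Qed.

Lemma norm1_dot u : vnorm u = 1 -> dot u u = 1.
Proof. unfold vnorm; intro H. rewrite <- (sqrt_sqrt (dot u u)) by apply dot_nonneg. rewrite H; ring. Qed.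

Lemma lagrange u v : dot (cross u v) (cross u v) = dot u u * dot v v - dot u v ^ 2.
Proof. unfold dot, cross; simpl; ring. Qed.

Lemma cs u v : dot u v ^ 2 <= dot u u * dot v v.
Proof. pose proof (dot_nonneg (cross u v)). rewrite lagrange in H. lra. Qed.

Lemma dotD J alpha D i j s : derivs_on J alpha D -> J s ->
  derivable_pt_lim (fun t => dot (D i t) (D j t)) s
    (dot (D (S i) s) (D j s) + dot (D i s) (D (S j) s)).
Proof. intros H Hs. apply vderiv_dot; eapply D_vderiv; eauto. Qed.

Lemma dotcD J alpha D k d s : derivs_on J alpha D -> J s ->
  derivable_pt_lim (fun t => dot (D k t) d) s (dot (D (S k) s) d).
Proof.
  intros H Hs. eapply dpl_ext.
  { apply (vderiv_dot (D k) (fun _ => d)); [eapply D_vderiv; eauto| apply vderiv_cst]. }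
  unfold dot; simpl; ring.
Qed.

Lemma pn_eq D s : curvature D s = 1 -> principal_normal D s = D 2%nat s.
Proof.
  intro H. unfold principal_normal, vscale. rewrite H, Rinv_1.
  destruct (D 2%nat s); simpl; f_equal; ring.
Qed.

Lemma det_d u v w d : det3 u v w * vx d = dot d u * vx (cross v w) + dot d v * vx (cross w u) + dot d w * vx (cross u v)
  /\ det3 u v w * vy d = dot d u * vy (cross v w) + dot d v * vy (cross w u) + dot d w * vy (cross u v)
  /\ det3 u v w * vz d = dot d u * vz (cross v w) + dot d v * vz (cross w u) + dot d w * vz (cross u v).
Proof. unfold det3, dot, cross; simpl; split; [|split]; ring. Qed.

Lemma forward J alpha D : is_open_interval J -> derivs_on J alpha D ->
  (forall s, J s -> curvature D s = 1) -> salkowski J D ->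
  forall s, J s -> det3 (D 3%nat s) (D 4%nat s) (D 5%nat s) = 0.
Proof.
  intros HI HD Hk [_ [d [Hd [c Hc]]]].
  assert (h2 : forall s, J s -> dot (D 2%nat s) d = c).
  { intros s Hs. rewrite <- (pn_eq D s (Hk s Hs)); auto. }
  assert (h3 : forall s, J s -> dot (D 3%nat s) d = 0).
  { intros s Hs. eapply (deriv_const0 J _ s _ c HI h2 Hs). eapply dotcD; eauto. }
  assert (h4 : forall s, J s -> dot (D 4%nat s) d = 0).
  { intros s Hs. eapply (deriv_const0 J _ s _ 0 HI h3 Hs). eapply dotcD; eauto. }
  assert (h5 : forall s, J s -> dot (D 5%nat s) d = 0).
  { intros s Hs. eapply (deriv_const0 J _ s _ 0 HI h4 Hs). eapply dotcD; eauto. }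
  intros s Hs.
  destruct (det_d (D 3%nat s) (D 4%nat s) (D 5%nat s) d) as [ex [ey ez]].
  rewrite !(dot_comm d), h3, h4, h5 in ex, ey, ez by auto.
  apply norm1_dot in Hd. unfold dot in Hd.
  destruct (Req_dec (det3 (D 3%nat s) (D 4%nat s) (D 5%nat s)) 0) as [|Hn]; auto.
  exfalso.
  assert (vx d = 0) by (apply (Rmult_eq_reg_l (det3 (D 3%nat s) (D 4%nat s) (D 5%nat s))); lra).
  assert (vy d = 0) by (apply (Rmult_eq_reg_l (det3 (D 3%nat s) (D 4%nat s) (D 5%nat s))); lra).
  assert (vz d = 0) by (apply (Rmult_eq_reg_l (det3 (D 3%nat s) (D 4%nat s) (D 5%nat s))); lra).
  nra.
Qed.

Notation g D i j s := (dot (D i%nat s) (D j%nat s)).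

Lemma frame J alpha D : is_open_interval J -> derivs_on J alpha D -> unit_speed J D ->
  (forall s, J s -> curvature D s = 1) ->
  forall s, J s -> g D 1 1 s = 1 /\ g D 2 2 s = 1 /\ g D 1 3 s = -1 /\ g D 2 3 s = 0
     /\ g D 2 4 s = - g D 3 3 s.
Proof.
  intros HI HD HU HK.
  assert (h11 : forall s, J s -> g D 1 1 s = 1) by (intros; apply norm1_dot; auto).
  assert (h22 : forall s, J s -> g D 2 2 s = 1) by (intros; apply norm1_dot; apply HK; auto).
  assert (h12 : forall s, J s -> g D 1 2 s = 0).
  { intros s Hs. pose proof (deriv_const0 J _ s _ 1 HI h11 Hs (dotD J alpha D 1 1 s HD Hs)).
    rewrite dot_comm in H. lra. }
  assert (h23 : forall s, J s -> g D 2 3 s = 0).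
  { intros s Hs. pose proof (deriv_const0 J _ s _ 1 HI h22 Hs (dotD J alpha D 2 2 s HD Hs)).
    rewrite dot_comm in H. lra. }
  assert (h13 : forall s, J s -> g D 1 3 s = -1).
  { intros s Hs. pose proof (deriv_const0 J _ s _ 0 HI h12 Hs (dotD J alpha D 1 2 s HD Hs)).
    rewrite h22 in H by auto. lra. }
  assert (h24 : forall s, J s -> g D 2 4 s = - g D 3 3 s).
  { intros s Hs. pose proof (deriv_const0 J _ s _ 0 HI h23 Hs (dotD J alpha D 2 3 s HD Hs)).
    lra. }
  intros s Hs; repeat split; auto.
Qed.

Definition PP (D : nat -> R -> R3) t := cross (D 3%nat t) (D 4%nat t).
Definition QQ (D : nat -> R -> R3) t := cross (D 3%nat t) (D 5%nat t).
Definition gg D t := dot (PP D t) (PP D t).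

Lemma gg_pos J alpha D : is_open_interval J -> derivs_on J alpha D -> unit_speed J D ->
  (forall s, J s -> curvature D s = 1) -> forall s, J s -> 0 < gg D s.
Proof.
  intros HI HD HU HK s Hs.
  destruct (frame J alpha D HI HD HU HK s Hs) as [h11 [h22 [h13 [h23 h24]]]].
  unfold gg, PP. rewrite lagrange.
  pose proof (cs (D 3%nat s) (D 1%nat s)) as c1.
  rewrite (dot_comm (D 3%nat s)), h13, h11 in c1.
  set (a := g D 3 3 s) in *. set (b := g D 3 4 s). set (e := g D 4 4 s).
  set (w := mkR3 (a * vx (D 4%nat s) - b * vx (D 3%nat s))
                 (a * vy (D 4%nat s) - b * vy (D 3%nat s))
                 (a * vz (D 4%nat s) - b * vz (D 3%nat s))).
  pose proof (cs w (D 2%nat s)) as c2.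
  assert (E1 : dot w (D 2%nat s) = a * g D 2 4 s - b * g D 2 3 s)
    by (unfold w, dot; simpl; ring).
  assert (E2 : dot w w = a*a*e - 2*a*b*b + b*b*a).
  { unfold w, a, b, e, dot; simpl; ring. }
  rewrite E1, E2, h24, h23, h22 in c2. fold a in c2.
  assert (Hx : a*a*a*a <= a * (a*e - b*b)) by nra.
  assert (Hy : a*a*a <= a*e - b*b).
  { apply (Rmult_le_reg_l a); nra. }
  fold b. fold e. nra.
Qed.

Lemma idq a b c : let P := cross a b in let Q := cross a c in
  vx Q * dot P P - dot P Q * vx P = det3 a b c * vx (cross a P) /\
  vy Q * dot P P - dot P Q * vy P = det3 a b c * vy (cross a P) /\
  vz Q * dot P P - dot P Q * vz P = det3 a b c * vz (cross a P).
Proof. intros P Q. unfold P, Q, cross, dot, det3; simpl; split; [|split]; ring. Qed.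

Lemma ncomp_d0 (p G : R -> R) q G' s : derivable_pt_lim p s q -> derivable_pt_lim G s G' ->
  0 < G s -> q * G s - (G' / 2) * p s = 0 ->
  derivable_pt_lim (fun t => p t / sqrt (G t)) s 0.
Proof.
  intros Hp HG Hpos Hc.
  assert (Hr : 0 < sqrt (G s)) by (apply sqrt_lt_R0; auto).
  assert (Hc1 : derivable_pt_lim (comp sqrt G) s (/ (2 * sqrt (G s)) * G')).
  { apply derivable_pt_lim_comp; auto. apply derivable_pt_lim_sqrt; auto. }
  pose proof (derivable_pt_lim_div p (comp sqrt G) s _ _ Hp Hc1 ltac:(unfold comp; lra)) as H.
  unfold div_fct, comp in H. eapply dpl_ext; [exact H|].
  rewrite <- (sqrt_sqrt (G s)) in Hc by lra.
  set (r := sqrt (G s)) in *. unfold Rsqr.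
  replace (q * r - / (2 * r) * G' * p s) with ((q * (r * r) - G' / 2 * p s) / r) by (field; lra).
  rewrite Hc. field. lra.
Qed.

Definition nn D t := mkR3 (vx (PP D t) / sqrt (gg D t)) (vy (PP D t) / sqrt (gg D t))
  (vz (PP D t) / sqrt (gg D t)).

Lemma backward J alpha D : is_open_interval J -> derivs_on J alpha D -> unit_speed J D ->
  (forall s, J s -> curvature D s = 1) ->
  (forall s, J s -> det3 (D 3%nat s) (D 4%nat s) (D 5%nat s) = 0) -> salkowski J D.
Proof.
  intros HI HD HU HK Hdet.
  assert (HP : forall s, J s -> vderiv (PP D) s (QQ D s)).
  { intros s Hs. eapply vderiv_ext.
    { apply vderiv_cross; eapply D_vderiv; eauto. }
    unfold QQ, cross; simpl; f_equal; ring. }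
  assert (Hg : forall s, J s -> derivable_pt_lim (gg D) s (2 * dot (PP D s) (QQ D s))).
  { intros s Hs. eapply dpl_ext. { apply vderiv_dot; apply HP; auto. }
    rewrite (dot_comm (QQ D s)); ring. }
  assert (Hid : forall s, J s ->
     vx (QQ D s) * gg D s - (2 * dot (PP D s) (QQ D s) / 2) * vx (PP D s) = 0 /\
     vy (QQ D s) * gg D s - (2 * dot (PP D s) (QQ D s) / 2) * vy (PP D s) = 0 /\
     vz (QQ D s) * gg D s - (2 * dot (PP D s) (QQ D s) / 2) * vz (PP D s) = 0).
  { intros s Hs. destruct (idq (D 3%nat s) (D 4%nat s) (D 5%nat s)) as [e1 [e2 e3]].
    unfold gg, PP, QQ. rewrite Hdet in e1, e2, e3 by auto.
    split; [|split]; lra. }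
  assert (Hgp := gg_pos J alpha D HI HD HU HK).
  destruct HI as [[s0 Hs0] HI'].
  assert (HIc : is_open_interval J) by (split; [exists s0|]; auto).
  assert (Hn : forall s, J s -> nn D s = nn D s0).
  { intros s Hs. unfold nn. f_equal;
    [apply (deriv0_const J (fun t => vx (PP D t) / sqrt (gg D t)) s s0 HIc)
    |apply (deriv0_const J (fun t => vy (PP D t) / sqrt (gg D t)) s s0 HIc)
    |apply (deriv0_const J (fun t => vz (PP D t) / sqrt (gg D t)) s s0 HIc)];
    auto; intros t Ht;
    destruct (HP t Ht) as [p1 [p2 p3]]; destruct (Hid t Ht) as [i1 [i2 i3]];
    eapply ncomp_d0; eauto. }
  split; [exists 1; auto|].
  exists (nn D s0). split.
  { unfold vnorm. replace (dot (nn D s0) (nn D s0)) with 1. apply sqrt_1.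
    pose proof (Hgp s0 Hs0). pose proof (sqrt_lt_R0 _ H).
    pose proof (sqrt_sqrt (gg D s0) ltac:(lra)).
    assert (E: forall x y z r, r<>0 -> x/r*(x/r)+y/r*(y/r)+z/r*(z/r) = (x*x+y*y+z*z)/(r*r))
      by (intros; field; auto).
    unfold nn. unfold dot at 1; cbn [vx vy vz]. rewrite E by lra.
    change (vx (PP D s0) * vx (PP D s0) + vy (PP D s0) * vy (PP D s0) + vz (PP D s0) * vz (PP D s0))
      with (gg D s0).
    rewrite H1. field. lra. }
  exists (dot (D 2%nat s0) (nn D s0)).
  intros s Hs. rewrite pn_eq by auto.
  apply (deriv0_const J (fun t => dot (D 2%nat t) (nn D s0)) s s0 HIc); auto. intros t Ht.
  eapply dpl_ext. { eapply dotcD; eauto. }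
  rewrite <- (Hn t Ht). unfold nn, dot, PP, cross; simpl. field.
  pose proof (sqrt_lt_R0 _ (Hgp t Ht)). lra.
Qed.

Theorem theorem4 (J : R -> Prop) (alpha : R -> R3) (D : nat -> R -> R3) :
  is_open_interval J ->
  derivs_on J alpha D ->
  unit_speed J D ->
  (forall s, J s -> curvature D s = 1) ->
  (salkowski J D <->
   forall s, J s -> det3 (D 3%nat s) (D 4%nat s) (D 5%nat s) = 0).
Proof.
  intros HI HD HU HK. split.
  - apply forward with alpha; auto.
  - apply backward with alpha; auto.
Qed.
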